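(* Let $L\in(\sqrt2\pi,+\infty)$ be fixed. Then for every $\omega\in\mathbb{R}$ the equation $$-\phi''+\omega\phi-\phi\log\phi^2=0$$ possesses an $L$-periodic solution which is even and strictly positive. *)

(* Defs.v *)
From Stdlib Require Import Reals.
Open Scope R_scope.

Definition solves_logNLS (omega : R) (phi phi1 phi2 : R -> R) : Prop :=
  forall x : R,
    derivable_pt_lim phi x (phi1 x) /\
    derivable_pt_lim phi1 x (phi2 x) /\
    - phi2 x + omega * phi x - phi x * ln ((phi x) ^ 2) = 0.

Definition L_periodic (L : R) (phi : R -> R) : Prop :=
  forall x : R, phi (x + L) = phi x.

Definition even_fun (phi : R -> R) : Prop :=
  forall x : R, phi (- x) = phi x.

(* Main.v *)
Require Import Defs.
From Stdlib Require Import Reals Ranalysis5 Lra Lia ClassicalEpsilon.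
From Coquelicot Require Import Coquelicot.
Open Scope R_scope.

Lemma locR (x e : R) (P : R -> Prop) : 0 < e ->
  (forall y, Rabs (y - x) < e -> P y) -> locally x P.
Proof.
intros He H. exists (mkposreal e He). intros y Hy. apply H. exact Hy.
Qed.

Lemma ln_le_m1 (y : R) : 0 < y -> ln y <= y - 1.
Proof.
intros Hy. destruct (Req_dec (ln y) 0) as [H|H].
- rewrite H. destruct (Rle_dec 1 y); [lra|].
  exfalso. assert (ln y < ln 1) by (apply ln_increasing; lra). rewrite ln_1 in H0. lra.
- pose proof (exp_ineq1 (ln y) H). rewrite exp_ln in H0 by lra. lra.
Qed.

Lemma ln_ge (p : R) : 0 < p -> 1 - / p <= ln p.
Proof.
intros Hp. pose proof (ln_le_m1 (/ p) (Rinv_0_lt_compat _ Hp)).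
rewrite ln_Rinv in H by lra. lra.
Qed.

Definition G (p : R) := 2*(p*p)*ln p - p*p + 1.
Definition Lf (p : R) := if Req_EM_T p 1 then 1 else ln p / (p - 1).
Definition K (p : R) := if Req_EM_T p 1 then 2 else G p / ((p - 1)*(p - 1)).
Definition U (p : R) := (p - 1) * sqrt (K p).
Definition D (p : R) := 2 * p * Lf p / sqrt (K p).

Lemma G_ge (p : R) : 0 < p -> (p-1)*(p-1) <= G p.
Proof.
intros Hp. pose proof (ln_ge p Hp). unfold G.
assert (2*(p*p)*ln p >= 2*(p*p)*(1 - /p)) by (apply Rle_ge, Rmult_le_compat_l; nra).
replace (2*(p*p)*(1 - /p)) with (2*(p*p) - 2*p) in H0 by (field; lra). nra.
Qed.

Lemma G1 : G 1 = 0.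
Proof. unfold G. rewrite ln_1. ring. Qed.

Lemma K_ge1 (p : R) : 0 < p -> 1 <= K p.
Proof.
intros Hp. unfold K. destruct (Req_EM_T p 1); [lra|].
assert (0 < (p-1)*(p-1)) by (apply Rmult_lt_0_compat_neq; lra) || nra.
apply (Rmult_le_reg_r ((p-1)*(p-1))); auto.
unfold Rdiv. rewrite Rmult_assoc, Rinv_l by lra. pose proof (G_ge p Hp). lra.
Qed.

Lemma G_K (p : R) : G p = (p-1)*(p-1) * K p.
Proof.
unfold K. destruct (Req_EM_T p 1).
- subst. rewrite G1. ring.
- field. intro H. apply n. nra.
Qed.

Lemma ln_Lf (p : R) : ln p = (p - 1) * Lf p.
Proof.
unfold Lf. destruct (Req_EM_T p 1).
- subst. rewrite ln_1. ring.
- field. lra.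
Qed.

Lemma Lf_pos (p : R) : 0 < p -> 0 < Lf p.
Proof.
intros Hp. unfold Lf. destruct (Req_EM_T p 1); [lra|].
destruct (Rlt_dec p 1).
- assert (ln p < ln 1) by (apply ln_increasing; lra). rewrite ln_1 in H.
  replace (ln p / (p - 1)) with ((- ln p) * / (1 - p)) by (field; lra).
  apply Rmult_lt_0_compat; [lra|apply Rinv_0_lt_compat; lra].
- assert (ln 1 < ln p) by (apply ln_increasing; lra). rewrite ln_1 in H.
  apply Rdiv_lt_0_compat; lra.
Qed.

Lemma Lf_cont1 : continuous Lf 1.
Proof.
apply continuity_pt_filterlim.
intros eps Heps. destruct (derivable_pt_lim_ln 1 Rlt_0_1 eps Heps) as [del Hdel].
exists del. split; [apply cond_pos|]. intros x [_ Hx]. change R in x. simpl in Hx. unfold R_dist in *.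
unfold Lf at 2. destruct (Req_EM_T 1 1) as [_|]; [|lra].
unfold Lf. destruct (Req_EM_T x 1).
- subst. change (Rabs (1-1) < eps). rewrite Rminus_diag_eq; [rewrite Rabs_R0; lra|reflexivity].
- specialize (Hdel (x - 1)). replace (1 + (x-1)) with x in Hdel by ring.
  rewrite ln_1, Rminus_0_r, Rinv_1 in Hdel. simpl. unfold R_dist. apply Hdel; [lra|exact Hx].
Qed.

Lemma Lf_cont (p : R) : 0 < p -> continuous Lf p.
Proof.
intros Hp. destruct (Req_dec p 1) as [->|Hn]; [apply Lf_cont1|].
apply continuous_ext_loc with (fun x => ln x / (x - 1)).
- apply locR with (Rmin p (Rabs (p-1))).
  + apply Rmin_pos; [lra|apply Rabs_pos_lt; lra].
  + intros y Hy. unfold Lf. destruct (Req_EM_T y 1); [|reflexivity].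
    subst. exfalso. pose proof (Rmin_r p (Rabs (p-1))). rewrite <- Rabs_Ropp in Hy.
    replace (- (1 - p)) with (p - 1) in Hy by ring. lra.
- apply (ex_derive_continuous (K:=R_AbsRing) (V:=R_NormedModule)). auto_derive. lra.
Qed.

Lemma contR (f : R -> R) (x : R) : ex_derive f x -> continuous f x.
Proof. apply (ex_derive_continuous (K:=R_AbsRing) (V:=R_NormedModule)). Qed.

Lemma cpt_of_der (f : R -> R) (x l : R) : is_derive f x l -> continuity_pt f x.
Proof. intros H. apply continuity_pt_filterlim. apply (contR f). exists l. exact H. Qed.

Lemma cont_eps (f : R -> R) (x : R) : continuous f x ->
  forall eps, 0 < eps -> exists del, 0 < del /\ forall y, Rabs (y - x) < del -> Rabs (f y - f x) < eps.
Proof.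
intros Hc eps He. apply continuity_pt_filterlim in Hc.
destruct (Hc eps He) as [del [Hd H]]. exists del. split; [lra|].
intros y Hy. destruct (Req_dec y x) as [->|Hne].
- rewrite Rminus_diag_eq, Rabs_R0; auto.
- apply (H y). split; [unfold D_x, no_cond; auto|exact Hy].
Qed.

Lemma cont_of_eps (f : R -> R) (x : R) :
  (forall eps, 0 < eps -> exists del, 0 < del /\ forall y, Rabs (y - x) < del -> Rabs (f y - f x) < eps)
  -> continuous f x.
Proof.
intros H. apply continuity_pt_filterlim. intros eps He. destruct (H eps He) as [del [Hd H']].
exists del. split; [lra|]. intros y [_ Hy]. apply H'. exact Hy.
Qed.

Lemma H_deriv (x : R) : 0 < x ->
  is_derive (fun y => G y - 2*(y-1)*(y-1)) x (4*(x-1)*(x * Lf x - 1)).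
Proof.
intros Hx. unfold G. auto_derive; [lra|].
replace (4 * (x - 1) * (x * Lf x - 1)) with (4*x*((x-1)*Lf x) - 4*(x-1)) by ring.
rewrite <- ln_Lf. field. lra.
Qed.

Lemma K1 : K 1 = 2.
Proof. unfold K. destruct (Req_EM_T 1 1); lra. Qed.

Lemma K_cont1 : continuous K 1.
Proof.
apply cont_of_eps. intros eps He.
assert (Hc : continuous (fun c => c * Lf c) 1).
{ apply (continuous_mult (fun c => c) Lf). apply continuous_id. apply Lf_cont1. }
destruct (cont_eps _ _ Hc (eps/4)) as [del [Hd Hdel]]; [lra|].
exists (Rmin del (1/2)). split; [apply Rmin_pos; lra|]. intros y Hy.
pose proof (Rmin_l del (1/2)). pose proof (Rmin_r del (1/2)).
assert (Hy0 : 0 < y) by (apply Rabs_def2 in Hy; lra).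
rewrite K1. destruct (Req_dec y 1) as [->|Hne]. { rewrite K1, Rminus_diag_eq, Rabs_R0; lra. }
destruct (MVT_gen (fun y => G y - 2*(y-1)*(y-1)) 1 y (fun x => 4*(x-1)*(x * Lf x - 1))) as [c [Hc1 Hc2]].
- intros x Hx. apply H_deriv. pose proof (Rmin_pos 1 y Rlt_0_1 Hy0). simpl in Hx. lra.
- intros x Hx. pose proof (Rmin_pos 1 y Rlt_0_1 Hy0). simpl in Hx. apply (cpt_of_der _ _ _ (H_deriv x ltac:(lra))).
- rewrite G1 in Hc2.
  assert (Hcy : Rabs (c - 1) <= Rabs (y - 1)).
  { destruct (Rle_dec 1 y).
    - rewrite Rmin_left, Rmax_right in Hc1 by lra. rewrite !Rabs_right; lra.
    - rewrite Rmin_right, Rmax_left in Hc1 by lra. rewrite !Rabs_left1; lra. }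
  specialize (Hdel c ltac:(lra)). rewrite Rmult_1_l in Hdel.
  unfold K. destruct (Req_EM_T y 1); [lra|].
  assert (Hq : G y / ((y-1)*(y-1)) - 2 = 4 * ((c-1)/(y-1)) * (c * Lf c - 1)).
  { assert (G y = 4 * (c - 1) * (c * Lf c - 1) * (y - 1) + 2*(y-1)*(y-1)) by lra.
    rewrite H1. field. lra. }
  rewrite Hq, !Rabs_mult.
  assert (Rabs ((c-1)/(y-1)) <= 1).
  { unfold Rdiv. rewrite Rabs_mult, Rabs_inv.
    apply (Rmult_le_reg_r (Rabs (y-1))). apply Rabs_pos_lt; lra.
    rewrite Rmult_assoc, Rinv_l, Rmult_1_r, Rmult_1_l; [lra|]. apply Rabs_no_R0; lra. }
  rewrite Rabs_right by lra.
  pose proof (Rabs_pos ((c-1)/(y-1))). pose proof (Rabs_pos (c * Lf c - 1)). replace (Lf 1) with 1 in Hdel by (unfold Lf; destruct (Req_EM_T 1 1); lra). nra.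
Qed.

Lemma K_cont (p : R) : 0 < p -> continuous K p.
Proof.
intros Hp. destruct (Req_dec p 1) as [->|Hn]; [apply K_cont1|].
apply continuous_ext_loc with (fun y => G y / ((y - 1)*(y-1))).
- apply locR with (Rmin p (Rabs (p-1))).
  + apply Rmin_pos; [lra|apply Rabs_pos_lt; lra].
  + intros y Hy. unfold K. destruct (Req_EM_T y 1); [|reflexivity].
    subst. exfalso. pose proof (Rmin_r p (Rabs (p-1))). rewrite <- Rabs_Ropp in Hy.
    replace (- (1 - p)) with (p - 1) in Hy by ring. lra.
- apply contR. unfold G. auto_derive. split; [lra|]. split; [|auto].
  intro H. apply Hn. nra.
Qed.

Lemma K_pos (p : R) : 0 < p -> 0 < K p.
Proof. intros Hp. pose proof (K_ge1 p Hp). lra. Qed.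

Lemma sqK_pos (p : R) : 0 < p -> 0 < sqrt (K p).
Proof. intros Hp. apply sqrt_lt_R0. apply K_pos; auto. Qed.

Lemma D_cont (p : R) : 0 < p -> continuous D p.
Proof.
intros Hp. unfold D, Rdiv.
apply (continuous_mult (fun p => 2*p*Lf p) (fun p => / sqrt (K p))).
- apply (continuous_mult (fun p => 2*p) Lf).
  + apply contR. auto_derive. auto.
  + apply Lf_cont; auto.
- apply continuous_Rinv_comp.
  + apply continuous_sqrt_comp. apply K_cont; auto.
  + pose proof (sqK_pos p Hp). lra.
Qed.

Lemma D_pos (p : R) : 0 < p -> 0 < D p.
Proof.
intros Hp. unfold D. apply Rdiv_lt_0_compat; [|apply sqK_pos; auto].
pose proof (Lf_pos p Hp). nra.
Qed.

Lemma UU (p : R) : 0 < p -> U p * U p = G p.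
Proof.
intros Hp. unfold U. rewrite G_K.
replace ((p - 1) * sqrt (K p) * ((p - 1) * sqrt (K p))) with ((p-1)*(p-1)*(sqrt (K p) * sqrt (K p))) by ring.
rewrite sqrt_sqrt; [ring|]. pose proof (K_pos p Hp); lra.
Qed.

Lemma UD (p : R) : 0 < p -> U p * D p = 2 * p * ln p.
Proof.
intros Hp. unfold U, D. rewrite (ln_Lf p). field. pose proof (sqK_pos p Hp). lra.
Qed.

Lemma U1 : U 1 = 0.
Proof. unfold U. ring. Qed.

Lemma D1 : D 1 = sqrt 2.
Proof.
unfold D, Lf. rewrite K1. destruct (Req_EM_T 1 1); [|lra].
pose proof (sqrt_sqrt 2 ltac:(lra)). pose proof Rlt_sqrt2_0.
apply (Rmult_eq_reg_r (sqrt 2)); [|lra]. unfold Rdiv. rewrite Rmult_assoc, Rinv_l by lra. lra.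
Qed.

Lemma sqK_cont1 : continuous (fun x => sqrt (K x)) 1.
Proof. apply continuous_sqrt_comp. apply K_cont1. Qed.

Lemma U_der1 : is_derive U 1 (D 1).
Proof.
apply is_derive_Reals. intros eps He.
destruct (cont_eps _ _ sqK_cont1 eps He) as [del [Hd H]].
exists (mkposreal del Hd). intros h Hh0 Hh. simpl in Hh.
rewrite U1, D1. unfold U.
replace ((1 + h - 1) * sqrt (K (1 + h)) - 0) with (h * sqrt (K (1+h))) by ring.
replace (h * sqrt (K (1 + h)) / h) with (sqrt (K (1+h))) by (field; auto).
rewrite <- K1. apply H. replace (1 + h - 1) with h by ring. exact Hh.
Qed.

Lemma locpos (p : R) : 0 < p -> locally p (fun y => 0 < y).
Proof. intros Hp. apply locR with p; auto. intros y Hy. apply Rabs_def2 in Hy. lra. Qed.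

Lemma U_der (p : R) : 0 < p -> is_derive U p (D p).
Proof.
intros Hp. destruct (Req_dec p 1) as [->|Hn]; [apply U_der1|].
assert (Hloc : locally p (fun y => (y-1)*sqrt (G y/((y-1)*(y-1))) = U y)).
{ apply locR with (Rmin p (Rabs (p-1))).
  + apply Rmin_pos; [lra|apply Rabs_pos_lt; lra].
  + intros y Hy. unfold U, K. destruct (Req_EM_T y 1); [|reflexivity].
    subst. exfalso. pose proof (Rmin_r p (Rabs (p-1))). rewrite <- Rabs_Ropp in Hy.
    replace (- (1 - p)) with (p - 1) in Hy by ring. lra. }
assert (Hex : ex_derive (fun y => (y-1)*sqrt (G y/((y-1)*(y-1)))) p).
{ unfold G. auto_derive. split; [lra|]. split; [|split; auto].
  - intro H. apply Hn. nra.
  - pose proof (K_pos p Hp). unfold K in H. destruct (Req_EM_T p 1); [lra|]. unfold G in H. exact H. }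
destruct Hex as [d Hd].
assert (HdU : is_derive U p d) by (apply (is_derive_ext_loc _ _ _ _ Hloc Hd)).
assert (H1 : is_derive (fun y => U y * U y) p (d * U p + U p * d)).
{ apply (is_derive_mult U U p d d HdU HdU). intros; apply Rmult_comm. }
assert (H2 : is_derive (fun y => U y * U y) p (4 * p * ln p)).
{ apply (is_derive_ext_loc G).
  - generalize (locpos p Hp). apply filter_imp. intros y Hy. symmetry. apply UU; auto.
  - unfold G. auto_derive; [lra|]. field. lra. }
apply is_derive_unique in H1. apply is_derive_unique in H2.
rewrite H1 in H2.
assert (HU : U p <> 0).
{ unfold U. pose proof (sqK_pos p Hp). intro H3. apply Rmult_integral in H3. lra. }
assert (Hdd : d = D p).
{ apply (Rmult_eq_reg_l (U p)); auto. rewrite UD by auto. lra. }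
rewrite <- Hdd. exact HdU.
Qed.

Lemma U_cpt (p : R) : 0 < p -> continuity_pt U p.
Proof. intros Hp. apply (cpt_of_der U p (D p)). apply U_der; auto. Qed.

Lemma U_incr (x y : R) : 0 < x -> x < y -> U x < U y.
Proof.
intros Hx Hxy.
destruct (MVT_gen U x y D) as [c [Hc1 Hc2]].
- intros z Hz. simpl in Hz. rewrite Rmin_left in Hz by lra. apply U_der; lra.
- intros z Hz. simpl in Hz. rewrite Rmin_left in Hz by lra. apply U_cpt; lra.
- rewrite Rmin_left in Hc1 by lra. pose proof (D_pos c ltac:(lra)). nra.
Qed.

Lemma U_inj (x y : R) : 0 < x -> 0 < y -> U x = U y -> x = y.
Proof.
intros Hx Hy H. destruct (Rtotal_order x y) as [Hl|[He|Hl]]; auto.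
- pose proof (U_incr x y Hx Hl). lra.
- pose proof (U_incr y x Hy Hl). lra.
Qed.

Definition a0 := exp (-31).
Definition b0 := exp 1.
Definition p0 := exp (-30).

Lemma a0_pos : 0 < a0.
Proof. apply exp_pos. Qed.

Lemma a0_p0 : a0 < p0.
Proof. apply exp_increasing. lra. Qed.

Lemma p0_lt1 : p0 < 1.
Proof. rewrite <- exp_0. apply exp_increasing. lra. Qed.

Lemma b0_gt1 : 1 < b0.
Proof. rewrite <- exp_0. apply exp_increasing. lra. Qed.

Lemma U_pos (p : R) : 1 < p -> 0 < U p.
Proof. intros H. unfold U. pose proof (sqK_pos p ltac:(lra)). nra. Qed.

Lemma U_neg (p : R) : 0 < p -> p < 1 -> U p < 0.
Proof. intros H H'. unfold U. pose proof (sqK_pos p H). nra. Qed.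

Lemma Ub0 : 1 < U b0.
Proof.
pose proof b0_gt1. pose proof (UU b0 ltac:(lra)). pose proof (U_pos b0 H).
unfold G in H0. replace (ln b0) with 1 in H0 by (unfold b0; rewrite ln_exp; auto). nra.
Qed.

Lemma Ua0 : -1 < U a0.
Proof.
pose proof a0_pos. pose proof (UU a0 H). pose proof (U_neg a0 H (Rlt_trans _ _ _ a0_p0 p0_lt1)).
unfold G in H0. replace (ln a0) with (-31) in H0 by (unfold a0; rewrite ln_exp; auto). nra.
Qed.

Definition rho1 := - U a0.
Definition rho0 := - U p0.

Lemma rho0_sq : rho0 * rho0 = 1 - 61 * (p0 * p0).
Proof.
unfold rho0. pose proof (UU p0 (Rlt_trans _ _ _ a0_pos a0_p0)).
unfold G in H. replace (ln p0) with (-30) in H by (unfold p0; rewrite ln_exp; auto). nra.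
Qed.

Lemma rho_facts : 0 < rho0 /\ rho0 < rho1 /\ rho1 < 1.
Proof.
pose proof a0_pos. pose proof a0_p0. pose proof p0_lt1. pose proof Ua0.
pose proof (U_neg p0 ltac:(lra) H1). pose proof (U_incr a0 p0 H H0).
unfold rho0, rho1. lra.
Qed.

Definition Psi (u : R) : R := epsilon (inhabits 1) (fun p => a0 <= p <= b0 /\ U p = u).

Lemma ab : a0 < b0.
Proof. pose proof a0_p0; pose proof p0_lt1; pose proof b0_gt1; lra. Qed.

Lemma Psi_spec (u : R) : U a0 <= u <= U b0 -> a0 <= Psi u <= b0 /\ U (Psi u) = u.
Proof.
intros Hu. unfold Psi. apply epsilon_spec.
destruct (f_interv_is_interv U a0 b0 u ab Hu) as [p Hp].
- intros x Hx. apply U_cpt. pose proof a0_pos. lra.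
- exists p. exact Hp.
Qed.

Lemma Psi_U (p : R) : a0 <= p <= b0 -> Psi (U p) = p.
Proof.
intros Hp. pose proof a0_pos.
assert (U a0 <= U p <= U b0).
{ split.
  - destruct (Rle_lt_or_eq_dec a0 p) as [Hl|He]; [lra| |].
    + left. apply U_incr; lra.
    + right. rewrite He. reflexivity.
  - destruct (Rle_lt_or_eq_dec p b0) as [Hl|He]; [lra| |].
    + left. apply U_incr; lra.
    + right. rewrite He. reflexivity. }
destruct (Psi_spec _ H0). apply U_inj; auto; lra.
Qed.

Lemma Psi_a0 : Psi (U a0) = a0.
Proof. apply Psi_U. pose proof ab; lra. Qed.

Lemma Psi_b0 : Psi (U b0) = b0.
Proof. apply Psi_U. pose proof ab; lra. Qed.

Lemma pos_from (p : R) : Psi (U a0) <= p -> 0 < p.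
Proof. rewrite Psi_a0. pose proof a0_pos. lra. Qed.

Definition PrfU (p : R) (Hp : Psi (U a0) <= p <= Psi (U b0)) : derivable_pt U p :=
  exist _ (D p) (proj1 (is_derive_Reals U p (D p)) (U_der p (pos_from p (proj1 Hp)))).

Lemma U_incr_ab : forall x y, a0 <= x -> x < y -> y <= b0 -> U x < U y.
Proof. intros x y Hx Hxy Hy. apply U_incr; auto. pose proof a0_pos; lra. Qed.

Lemma U_Psi_ab : forall x, U a0 <= x -> x <= U b0 -> comp U Psi x = id x.
Proof. intros x H1 H2. unfold comp, id. apply Psi_spec. lra. Qed.

Lemma Psi_ab : forall x, U a0 <= x -> x <= U b0 -> a0 <= Psi x <= b0.
Proof. intros x H1 H2. apply Psi_spec. lra. Qed.

Lemma U_cpt_ab : forall x, a0 <= x <= b0 -> continuity_pt U x.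
Proof. intros x Hx. apply U_cpt. pose proof a0_pos; lra. Qed.

Lemma Uab : U a0 < U b0.
Proof. apply U_incr. apply a0_pos. apply ab. Qed.

Lemma Psi_cpt (u : R) : U a0 < u < U b0 -> continuity_pt Psi u.
Proof.
intros Hu. apply (continuity_pt_recip_interv U Psi a0 b0 ab U_incr_ab U_Psi_ab Psi_ab U_cpt_ab u).
exact Hu.
Qed.

Lemma Psi_der (u : R) : U a0 < u < U b0 -> derivable_pt_lim Psi u (/ D (Psi u)).
Proof.
intros Hu.
assert (Hi : Psi (U a0) <= Psi u <= Psi (U b0)).
{ rewrite Psi_a0, Psi_b0. apply Psi_spec. lra. }
assert (Hp : 0 < Psi u) by (apply (pos_from _ (proj1 Hi))).
pose proof (derivable_pt_lim_recip_interv U Psi (U a0) (U b0) u PrfU (Psi_cpt u Hu) Uab Hu Hi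
  (fun x Hx => U_Psi_ab x (proj1 Hx) (proj2 Hx))) as H.
simpl in H. replace (/ D (Psi u)) with (1 / D (Psi u)) by (field; pose proof (D_pos _ Hp); lra).
apply H. pose proof (D_pos _ Hp); lra.
Qed.


Definition inr (u : R) := U a0 < u < U b0.
Definition P (u : R) := / D (Psi u).

Lemma Psi_in (u : R) : inr u -> a0 <= Psi u <= b0 /\ U (Psi u) = u.
Proof. intros H. apply Psi_spec. unfold inr in H. lra. Qed.

Lemma Psi_pos (u : R) : inr u -> 0 < Psi u.
Proof. intros H. pose proof (Psi_in u H). pose proof a0_pos. lra. Qed.

Lemma P_pos (u : R) : inr u -> 0 < P u.
Proof. intros H. unfold P. apply Rinv_0_lt_compat, D_pos, Psi_pos; auto. Qed.

Lemma Psi_cont (u : R) : inr u -> continuous Psi u.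
Proof. intros H. apply continuity_pt_filterlim. apply Psi_cpt. exact H. Qed.

Lemma P_cont (u : R) : inr u -> continuous P u.
Proof.
intros H. unfold P. apply continuous_Rinv_comp.
- apply (continuous_comp Psi D). apply Psi_cont; auto. apply D_cont, Psi_pos; auto.
- pose proof (D_pos _ (Psi_pos u H)). lra.
Qed.

Lemma Psi_der' (u : R) : inr u -> is_derive Psi u (P u).
Proof. intros H. apply is_derive_Reals. apply Psi_der. exact H. Qed.

Lemma Psi0 : Psi 0 = 1.
Proof. rewrite <- U1. apply Psi_U. pose proof a0_p0. pose proof p0_lt1. pose proof b0_gt1. lra. Qed.

Lemma P0 : P 0 = / sqrt 2.
Proof. unfold P. rewrite Psi0, D1. reflexivity. Qed.

Lemma uD (u : R) : inr u -> u * D (Psi u) = 2 * Psi u * ln (Psi u).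
Proof.
intros H. rewrite <- UD by (apply Psi_pos; auto). f_equal. symmetry. apply Psi_in; auto.
Qed.

Lemma G_Psi (u : R) : inr u -> G (Psi u) = u * u.
Proof.
intros H. rewrite <- UU by (apply Psi_pos; auto). destruct (Psi_in u H) as [_ ->]. reflexivity.
Qed.

Lemma Psi_le1 (u : R) : inr u -> u <= 0 -> Psi u <= 1.
Proof.
intros H Hu. destruct (Rle_dec (Psi u) 1) as [|Hn]; auto. exfalso.
pose proof (U_incr 1 (Psi u) Rlt_0_1 ltac:(lra)). rewrite U1 in H0.
destruct (Psi_in u H) as [_ He]. lra.
Qed.

Lemma inr_rs (r t : R) : Rabs r < rho1 -> inr (r * sin t).
Proof.
intros Hr. unfold inr. pose proof rho_facts. pose proof Ub0.
assert (Rabs (r * sin t) <= Rabs r).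
{ rewrite Rabs_mult. pose proof (Rabs_pos r). assert (Rabs (sin t) <= 1) by (apply Rabs_le; apply SIN_bound).
  nra. }
assert (Hx : Rabs (r * sin t) < rho1) by lra. apply Rabs_def2 in Hx. unfold rho1 in *. lra.
Qed.

Lemma deriv0_const (F : R -> R) : (forall x, is_derive F x 0) -> forall x y, F x = F y.
Proof.
intros H x y. destruct (MVT_gen F x y (fun _ => 0)) as [c [_ Hc]].
- intros z _. apply H.
- intros z _. apply (cpt_of_der F z 0 (H z)).
- lra.
Qed.

Lemma mono_le (F dF : R -> R) (a b : R) : a <= b ->
  (forall x, a <= x <= b -> is_derive F x (dF x)) ->
  (forall x, a <= x <= b -> 0 <= dF x) -> F a <= F b.
Proof.
intros Hab H Hd. destruct (MVT_gen F a b dF) as [c [Hc1 Hc2]].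
- intros z Hz. simpl in Hz. rewrite Rmin_left, Rmax_right in Hz by lra. apply H; lra.
- intros z Hz. simpl in Hz. rewrite Rmin_left, Rmax_right in Hz by lra. apply (cpt_of_der F z (dF z)), H; lra.
- rewrite Rmin_left, Rmax_right in Hc1 by lra. pose proof (Hd c Hc1). nra.
Qed.

Lemma mono_lt (F dF : R -> R) (a b : R) : a < b ->
  (forall x, a <= x <= b -> is_derive F x (dF x)) ->
  (forall x, a <= x <= b -> 0 < dF x) -> F a < F b.
Proof.
intros Hab H Hd. destruct (MVT_gen F a b dF) as [c [Hc1 Hc2]].
- intros z Hz. simpl in Hz. rewrite Rmin_left, Rmax_right in Hz by lra. apply H; lra.
- intros z Hz. simpl in Hz. rewrite Rmin_left, Rmax_right in Hz by lra. apply (cpt_of_der F z (dF z)), H; lra.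
- rewrite Rmin_left, Rmax_right in Hc1 by lra. pose proof (Hd c Hc1). nra.
Qed.

Section Rho.
Variable r : R.
Hypothesis Hr : Rabs r < rho1.

Definition f (t : R) := P (r * sin t).
Definition X (th : R) := RInt f (PI/2) th.
Definition T := X (PI/2 + 2*PI).

Lemma f_cont (t : R) : continuous f t.
Proof.
unfold f. apply (continuous_comp (fun t => r * sin t) P).
- apply contR. auto_derive. auto.
- apply P_cont, inr_rs; auto.
Qed.

Lemma f_pos (t : R) : 0 < f t.
Proof. unfold f. apply P_pos, inr_rs; auto. Qed.

Lemma f_per (t : R) : f (t + 2*PI) = f t.
Proof. unfold f. rewrite sin_plus, sin_2PI, cos_2PI. f_equal. ring. Qed.

Lemma f_sym (t : R) : f (PI - t) = f t.
Proof. unfold f. rewrite sin_PI_x. reflexivity. Qed.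

Lemma f_exRInt (a b : R) : ex_RInt f a b.
Proof. apply (ex_RInt_continuous (V:=R_CompleteNormedModule)). intros; apply f_cont. Qed.

Lemma X_der (th : R) : is_derive X th (f th).
Proof.
apply (is_derive_RInt f X (PI/2) th).
- apply filter_forall. intros b. unfold X. apply (RInt_correct (V:=R_CompleteNormedModule)), f_exRInt.
- apply f_cont.
Qed.

Lemma X_pi2 : X (PI/2) = 0.
Proof. unfold X. rewrite RInt_point. reflexivity. Qed.

Lemma X_per (th : R) : X (th + 2*PI) = X th + T.
Proof.
assert (H := deriv0_const (fun th => X (th + 2*PI) - X th)).
assert (H0 : forall x, is_derive (fun th => X (th + 2*PI) - X th) x 0).
{ intros x. change R in x.
  assert (Hd : is_derive (fun th => X (th + 2*PI) - X th) x (1 * f (x + 2*PI) - f x)).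
  { apply (is_derive_minus (fun th => X (th + 2*PI)) X).
    - apply (is_derive_comp X (fun th => th + 2*PI)). apply X_der. auto_derive; auto.
    - apply X_der. }
  rewrite f_per in Hd. replace (1 * f x - f x) with 0 in Hd by ring. exact Hd. }
specialize (H H0 th (PI/2)). simpl in H. rewrite X_pi2 in H. unfold T. lra.
Qed.

Lemma X_sym (th : R) : X (PI - th) = - X th.
Proof.
assert (H := deriv0_const (fun th => X (PI - th) + X th)).
assert (H0 : forall x, is_derive (fun th => X (PI - th) + X th) x 0).
{ intros x. change R in x.
  assert (Hd : is_derive (fun th => X (PI - th) + X th) x ((-1) * f (PI - x) + f x)).
  { apply (is_derive_plus (fun th => X (PI - th)) X).
    - apply (is_derive_comp X (fun th => PI - th)). apply X_der. auto_derive; try easy; ring.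
    - apply X_der. }
  rewrite f_sym in Hd. replace ((-1) * f x + f x) with 0 in Hd by ring. exact Hd. }
specialize (H H0 th (PI/2)). simpl in H. replace (PI - PI/2) with (PI/2) in H by field.
rewrite X_pi2 in H. lra.
Qed.

Lemma X_incr (x y : R) : x < y -> X x < X y.
Proof.
intros H. apply (mono_lt X f); auto. intros; apply X_der. intros; apply f_pos.
Qed.

Lemma X_cpt (x : R) : continuity_pt X x.
Proof. apply (cpt_of_der X x (f x)), X_der. Qed.

Lemma T_pos : 0 < T.
Proof. unfold T. rewrite <- X_pi2. apply X_incr. pose proof PI_RGT_0. lra. Qed.

Lemma X_n (n : nat) : X (PI/2 + 2*PI*INR n) = INR n * T.
Proof.
induction n.
- simpl. rewrite Rmult_0_r, Rplus_0_r, X_pi2. ring.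
- rewrite S_INR. replace (PI/2 + 2*PI*(INR n + 1)) with ((PI/2 + 2*PI*INR n) + 2*PI) by ring.
  rewrite X_per, IHn. lra.
Qed.

Lemma X_surj (x : R) : exists th, X th = x.
Proof.
destruct (INR_unbounded (Rabs x / T)) as [n Hn].
pose proof T_pos.
assert (Hn' : Rabs x < INR n * T).
{ apply (Rmult_lt_compat_r T) in Hn; auto. unfold Rdiv in Hn. rewrite Rmult_assoc, Rinv_l, Rmult_1_r in Hn; lra. }
assert (H1 : X (PI/2 - 2*PI*INR n) = - (INR n * T)).
{ rewrite <- X_n, <- X_sym. f_equal. field. }
pose proof (pos_INR n). pose proof PI_RGT_0.
destruct (f_interv_is_interv X (PI/2 - 2*PI*INR n) (PI/2 + 2*PI*INR n) x) as [th [_ Hth]].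
- assert (0 < INR n) by (pose proof (Rabs_pos x); nra). nra.
- rewrite H1, X_n. apply Rabs_def2b' || (pose proof (Rle_abs x); pose proof (Rle_abs (-x)); rewrite Rabs_Ropp in *; lra).
- intros; apply X_cpt.
- exists th; auto.
Qed.

End Rho.

Section Theta.
Variable r : R.
Hypothesis Hr : Rabs r < rho1.

Definition th (x : R) := epsilon (inhabits 0) (fun t => X r t = x).

Lemma X_th (x : R) : X r (th x) = x.
Proof. unfold th. apply epsilon_spec. apply X_surj; auto. Qed.

Lemma X_inj (x y : R) : X r x = X r y -> x = y.
Proof.
intros H. destruct (Rtotal_order x y) as [Hl|[He|Hl]]; auto.
- pose proof (X_incr r Hr x y Hl). lra.
- pose proof (X_incr r Hr y x Hl). lra.
Qed.

Lemma th_X (t : R) : th (X r t) = t.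
Proof. apply X_inj. apply X_th. Qed.

Lemma th_mono (x y : R) : x <= y -> th x <= th y.
Proof.
intros H. destruct (Rle_dec (th x) (th y)) as [|Hn]; auto.
pose proof (X_incr r Hr (th y) (th x) ltac:(lra)). rewrite !X_th in H0. lra.
Qed.

Lemma th_per (x : R) : th (x + T r) = th x + 2*PI.
Proof. rewrite <- (X_th x) at 1. rewrite <- X_per by auto. apply th_X. Qed.

Lemma th_sym (x : R) : th (- x) = PI - th x.
Proof. rewrite <- (X_th x) at 1. rewrite <- X_sym by auto. apply th_X. Qed.

Lemma th0 : th 0 = PI/2.
Proof. rewrite <- (X_pi2 r). apply th_X. Qed.

Lemma th_cpt (x : R) : continuity_pt th x.
Proof.
apply (continuity_pt_recip_interv (X r) th (th x - 1) (th x + 1)); [lra| | | | |].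
- intros a b _ Hab _. apply X_incr; auto.
- intros y _ _. unfold comp, id. apply X_th.
- intros y H1 H2. apply th_mono in H1. apply th_mono in H2. rewrite !th_X in H1, H2. lra.
- intros a _. apply X_cpt; auto.
- split; [rewrite <- (X_th x) at 2|rewrite <- (X_th x) at 1]; apply X_incr; auto; lra.
Qed.

Lemma th_der (x : R) : derivable_pt_lim th x (/ f r (th x)).
Proof.
assert (Hi : th (x - 1) <= th x <= th (x + 1)) by (split; apply th_mono; lra).
pose proof (derivable_pt_lim_recip_interv (X r) th (x - 1) (x + 1) x
  (fun p _ => exist _ (f r p) (proj1 (is_derive_Reals _ _ _) (X_der r Hr p)))
  (th_cpt x) ltac:(lra) ltac:(lra) Hi (fun y _ => X_th y)) as H.
simpl in H. pose proof (f_pos r Hr (th x)).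
replace (/ f r (th x)) with (1 / f r (th x)) by (field; lra). apply H. lra.
Qed.

End Theta.

Section Sol.
Variable r : R.
Hypothesis Hr : Rabs r < rho1.
Variable om : R.

Definition cc := exp (om / 2).
Definition uu (x : R) := r * sin (th r x).
Definition phi (x : R) := cc * Psi (uu x).
Definition phi1 (x : R) := cc * (r * cos (th r x)).
Definition phi2 (x : R) := - (cc * (2 * Psi (uu x) * ln (Psi (uu x)))).

Lemma uu_der (x : R) : is_derive uu x (/ P (uu x) * (r * cos (th r x))).
Proof.
unfold uu. apply (is_derive_comp (fun t => r * sin t) (th r)).
- auto_derive; auto. ring.
- apply is_derive_Reals. apply th_der; auto.
Qed.

Lemma phi_der (x : R) : is_derive phi x (phi1 x).
Proof.
unfold phi, phi1. apply (is_derive_scal (fun x => Psi (uu x))).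
pose proof (P_pos (uu x) (inr_rs r (th r x) Hr)).
assert (H1 : is_derive (fun x => Psi (uu x)) x ((/ P (uu x) * (r * cos (th r x))) * P (uu x))).
{ apply (is_derive_comp Psi uu). apply Psi_der', inr_rs; auto. apply uu_der. }
replace (/ P (uu x) * (r * cos (th r x)) * P (uu x)) with (r * cos (th r x)) in H1 by (field; lra).
exact H1.
Qed.

Lemma phi1_der (x : R) : is_derive phi1 x (phi2 x).
Proof.
unfold phi1, phi2.
replace (- (cc * (2 * Psi (uu x) * ln (Psi (uu x))))) with (cc * - (2 * Psi (uu x) * ln (Psi (uu x)))) by ring.
apply (is_derive_scal (fun x => r * cos (th r x))).
assert (H1 : is_derive (fun x => r * cos (th r x)) x (/ P (uu x) * (r * - sin (th r x)))).
{ apply (is_derive_comp (fun t => r * cos t) (th r)).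
  - auto_derive; auto. ring.
  - apply is_derive_Reals. apply th_der; auto. }
assert (He : / P (uu x) * (r * - sin (th r x)) = - (2 * Psi (uu x) * ln (Psi (uu x)))).
{ unfold P. rewrite Rinv_inv. rewrite <- uD by (apply inr_rs; auto). unfold uu. ring. }
rewrite He in H1. exact H1.
Qed.

Lemma phi_pos (x : R) : 0 < phi x.
Proof. unfold phi, cc. apply Rmult_lt_0_compat. apply exp_pos. apply Psi_pos, inr_rs; auto. Qed.

Lemma phi_eq (x : R) : - phi2 x + om * phi x - phi x * ln ((phi x) ^ 2) = 0.
Proof.
unfold phi2, phi. pose proof (Psi_pos (uu x) (inr_rs r (th r x) Hr)).
assert (Hc : (cc * Psi (uu x)) ^ 2 = exp om * (Psi (uu x) * Psi (uu x))).
{ unfold cc. replace om with (om/2 + om/2) at 2 by field. rewrite exp_plus. ring. }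
rewrite Hc, ln_mult, ln_exp, ln_mult by (try apply exp_pos; try nra; auto). ring.
Qed.

Lemma phi_sol : solves_logNLS om phi phi1 phi2.
Proof.
intros x. split; [|split].
- apply is_derive_Reals, phi_der.
- apply is_derive_Reals, phi1_der.
- apply phi_eq.
Qed.

Lemma phi_per (x : R) : phi (x + T r) = phi x.
Proof.
unfold phi, uu. rewrite th_per by auto. rewrite sin_plus, sin_2PI, cos_2PI. f_equal. f_equal. f_equal. ring.
Qed.

Lemma phi_even (x : R) : phi (- x) = phi x.
Proof. unfold phi, uu. rewrite th_sym by auto. rewrite sin_PI_x. reflexivity. Qed.

End Sol.


Lemma abs0_lt : Rabs 0 < rho1.
Proof. rewrite Rabs_R0. pose proof rho_facts. lra. Qed.

Lemma T0 : T 0 = sqrt 2 * PI.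
Proof.
unfold T, X, f.
rewrite (RInt_ext (V:=R_CompleteNormedModule) _ (fun _ => / sqrt 2)).
- rewrite (RInt_const (V:=R_CompleteNormedModule)). simpl. unfold mult; simpl.
  pose proof (sqrt_sqrt 2 ltac:(lra)). pose proof Rlt_sqrt2_0.
  apply (Rmult_eq_reg_r (sqrt 2)); [|lra].
  replace (PI / 2 + 2 * PI - PI / 2) with (2 * PI) by field.
  change (2 * PI * / sqrt 2 * sqrt 2 = sqrt 2 * PI * sqrt 2). rewrite Rmult_assoc, Rinv_l by lra. replace (sqrt 2 * PI * sqrt 2) with (sqrt 2 * sqrt 2 * PI) by ring. rewrite H. ring.
- intros x _. rewrite Rmult_0_l. apply P0.
Qed.

Lemma rho0_lt : Rabs rho0 < rho1.
Proof. pose proof rho_facts. rewrite Rabs_right; lra. Qed.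

Definition w (t : R) := Psi (rho0 * sin t).
Definition Q (t : R) := 1 - 2 * ln (w t).
Definition g (t : R) := sqrt (Q t).
Definition dg (t : R) := rho0 * cos t * P (rho0 * sin t) * - / (w t * sqrt (Q t)).

Lemma inr0 (t : R) : inr (rho0 * sin t).
Proof. apply inr_rs, rho0_lt. Qed.

Lemma w_pos (t : R) : 0 < w t.
Proof. apply Psi_pos, inr0. Qed.

Lemma w_le1 (t : R) : PI <= t <= 2*PI -> w t <= 1.
Proof.
intros Ht. apply Psi_le1. apply inr0. pose proof (sin_le_0 t (proj1 Ht) (proj2 Ht)).
pose proof rho_facts. nra.
Qed.

Lemma Q_pos (t : R) : PI <= t <= 2*PI -> 1 <= Q t.
Proof.
intros Ht. unfold Q. pose proof (w_le1 t Ht). pose proof (w_pos t).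
assert (ln (w t) <= 0).
{ destruct (Req_dec (w t) 1) as [->|]. rewrite ln_1; lra.
  left. rewrite <- ln_1. apply ln_increasing; lra. }
lra.
Qed.

Lemma g_der (t : R) : PI <= t <= 2*PI -> is_derive g t (dg t).
Proof.
intros Ht. pose proof (Q_pos t Ht). pose proof (w_pos t).
assert (Hw : is_derive w t (rho0 * cos t * P (rho0 * sin t))).
{ unfold w. apply (is_derive_comp Psi (fun t => rho0 * sin t)).
  apply Psi_der', inr0. auto_derive; auto. ring. }
assert (Hh : is_derive (fun y => sqrt (1 - 2 * ln y)) (w t) (- / (w t * sqrt (Q t)))).
{ auto_derive.
  - unfold Q in H. split; [lra|]. split; auto. lra.
  - unfold Q. pose proof (sqrt_lt_R0 (1 - 2 * ln (w t)) ltac:(unfold Q in H; lra)). replace (1 + - (2 * ln (w t))) with (1 - 2 * ln (w t)) by ring. field. lra. }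
unfold g, dg. unfold Q at 1. apply (is_derive_comp (fun y => sqrt (1 - 2 * ln y)) w); auto.
Qed.

Lemma dg_bound (t : R) : PI <= t <= 2*PI -> Rabs (dg t) <= f rho0 t.
Proof.
intros Ht. pose proof (Q_pos t Ht) as HQ. pose proof (w_pos t) as Hw.
set (B := w t * sqrt (Q t)).
assert (HB : 0 < B) by (unfold B; apply Rmult_lt_0_compat; auto; apply sqrt_lt_R0; lra).
assert (HB2 : B * B = 1 - (rho0 * sin t) * (rho0 * sin t)).
{ unfold B. replace (w t * sqrt (Q t) * (w t * sqrt (Q t))) with (w t * w t * (sqrt (Q t) * sqrt (Q t))) by ring.
  rewrite sqrt_sqrt by lra. rewrite <- (G_Psi _ (inr0 t)). fold (w t). unfold Q, G. ring. }
assert (Hc : Rabs (rho0 * cos t) <= B).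
{ pose proof (sin2_cos2 t). unfold Rsqr in H. pose proof rho_facts.
  assert ((rho0 * cos t) * (rho0 * cos t) <= B * B) by nra.
  destruct (Rle_dec (Rabs (rho0 * cos t)) B) as [|Hn]; auto. exfalso.
  assert (Rabs (rho0 * cos t) * Rabs (rho0 * cos t) = (rho0 * cos t) * (rho0 * cos t)).
  { rewrite <- Rabs_mult. rewrite Rabs_right; [reflexivity|]. apply Rle_ge. nra. }
  nra. }
unfold dg. fold B. unfold f. pose proof (P_pos _ (inr0 t)) as HP.
rewrite !Rabs_mult, Rabs_Ropp, Rabs_inv, (Rabs_right (P _)) by lra.
rewrite (Rabs_right B) by lra.
apply (Rmult_le_reg_r B); auto. rewrite Rmult_assoc, Rinv_l, Rmult_1_r by lra. rewrite Rabs_mult in Hc. nra.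
Qed.

Lemma g_pi : g PI = 1.
Proof. unfold g, Q, w. rewrite sin_PI, Rmult_0_r, Psi0, ln_1. replace (1 - 2*0) with 1 by ring. apply sqrt_1. Qed.

Lemma g_2pi : g (2*PI) = 1.
Proof. unfold g, Q, w. rewrite sin_2PI, Rmult_0_r, Psi0, ln_1. replace (1 - 2*0) with 1 by ring. apply sqrt_1. Qed.

Lemma g_3pi2 : g (3*(PI/2)) = sqrt 61.
Proof.
unfold g, Q, w.
replace (3*(PI/2)) with (PI/2 + PI) by field. rewrite neg_sin.
replace (rho0 * - sin (PI/2)) with (U p0) by (rewrite sin_PI2; unfold rho0; ring).
rewrite Psi_U.
- unfold p0. rewrite ln_exp. f_equal. ring.
- pose proof a0_p0; pose proof p0_lt1; pose proof b0_gt1; lra.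
Qed.

Lemma T_rho0 : 2 * sqrt 2 * PI <= T rho0.
Proof.
pose proof PI_RGT_0 as Hpi.
assert (H1 : X rho0 PI - g PI <= X rho0 (3*(PI/2)) - g (3*(PI/2))).
{ apply (mono_le (fun t => X rho0 t - g t) (fun t => f rho0 t - dg t)); [lra| |].
  - intros x Hx. apply (is_derive_minus (X rho0) g). apply X_der, rho0_lt. apply g_der. lra.
  - intros x Hx. pose proof (dg_bound x ltac:(lra)). pose proof (Rle_abs (dg x)). lra. }
assert (H2 : X rho0 (3*(PI/2)) + g (3*(PI/2)) <= X rho0 (2*PI) + g (2*PI)).
{ apply (mono_le (fun t => X rho0 t + g t) (fun t => f rho0 t + dg t)); [lra| |].
  - intros x Hx. apply (is_derive_plus (X rho0) g). apply X_der, rho0_lt. apply g_der. lra.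
  - intros x Hx. pose proof (dg_bound x ltac:(lra)). pose proof (Rle_abs (- dg x)). rewrite Rabs_Ropp in H0. lra. }
rewrite g_pi, g_2pi, g_3pi2 in *.
assert (H3 : X rho0 (2*PI) < X rho0 (PI/2 + 2*PI)) by (apply X_incr; [apply rho0_lt|lra]).
assert (H4 : X rho0 (PI/2) < X rho0 PI) by (apply X_incr; [apply rho0_lt|lra]).
rewrite X_pi2 in H4. unfold T.
assert (7 < sqrt 61).
{ rewrite <- (sqrt_square 7) by lra. apply sqrt_lt_1; lra. }
assert (sqrt 2 < 3/2).
{ rewrite <- (sqrt_square (3/2)) by lra. apply sqrt_lt_1; lra. }
pose proof PI_4. pose proof Rlt_sqrt2_0. nra.
Qed.

Lemma abs_between (x m : R) : Rabs x <= m -> -m <= x <= m.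
Proof. intros H. pose proof (Rle_abs x). pose proof (Rle_abs (-x)). rewrite Rabs_Ropp in H1. lra. Qed.

Lemma bnd (q s m : R) : Rabs q < m -> -m <= q * sin s <= m.
Proof.
intros H. apply abs_between. rewrite Rabs_mult.
pose proof (Rabs_le (sin s) 1 (SIN_bound s)). pose proof (Rabs_pos q). pose proof (Rabs_pos (sin s)). nra.
Qed.

Lemma T_cont (r : R) : Rabs r < rho1 -> continuity_pt T r.
Proof.
intros Hr. apply continuity_pt_filterlim. apply cont_of_eps. intros eps He.
set (m := (Rabs r + rho1)/2).
pose proof (Rabs_pos r) as Hra.
assert (Hm : Rabs r < m /\ m < rho1) by (unfold m; lra).
assert (HPc : forall u, -m <= u <= m -> continuity_pt P u).
{ intros u Hu. apply continuity_pt_filterlim. apply P_cont. unfold inr.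
  pose proof Ub0. pose proof rho_facts. unfold rho1 in *. lra. }
pose proof (Heine P (fun u => -m <= u <= m) (compact_P3 (-m) m) HPc) as HU.
pose proof PI_RGT_0 as Hpi.
assert (He' : 0 < eps / (4 * PI)) by (apply Rdiv_lt_0_compat; lra).
destruct (HU (mkposreal _ He')) as [del Hdel]. simpl in Hdel.
exists (Rmin del (m - Rabs r)). split.
{ apply Rmin_pos; [apply cond_pos|lra]. }
intros r' Hr'. pose proof (Rmin_l del (m - Rabs r)). pose proof (Rmin_r del (m - Rabs r)).
assert (Hr'm : Rabs r' < m).
{ pose proof (Rabs_triang_inv r' r). lra. }
assert (Hr'1 : Rabs r' < rho1) by lra.
unfold T, X.
rewrite <- (RInt_minus (V:=R_CompleteNormedModule)) by (apply f_exRInt; auto).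
assert (Hb : Rabs (RInt (fun x => minus (f r' x) (f r x)) (PI/2) (PI/2 + 2*PI)) <= (PI/2 + 2*PI - PI/2) * (eps / (4*PI))).
{ apply abs_RInt_le_const; [lra| |].
  - apply (ex_RInt_continuous (V:=R_CompleteNormedModule)). intros z _.
    apply (continuous_minus (f r') (f r)); apply f_cont; auto.
  - intros t _. unfold f. change (minus (P (r' * sin t)) (P (r * sin t))) with (P (r' * sin t) - P (r * sin t)).
    left. apply Hdel; try (apply bnd; lra).
    replace (r' * sin t - r * sin t) with ((r' - r) * sin t) by ring.
    rewrite Rabs_mult. pose proof (Rabs_le (sin t) 1 (SIN_bound t)). pose proof (Rabs_pos (r'-r)).
    pose proof (Rabs_pos (sin t)). nra. }
change (Rabs (RInt (fun x : R => minus (f r' x) (f r x)) (PI / 2) (PI / 2 + 2 * PI)) < eps).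
replace (PI / 2 + 2 * PI - PI / 2) with (2*PI) in Hb by ring.
assert (2 * PI * (eps / (4 * PI)) < eps) by (field_simplify; lra).
lra.
Qed.


Lemma find_n (s L : R) : 0 < s -> s < L -> exists n : nat, INR n * s < L <= INR (S n) * s.
Proof.
intros Hs HL.
assert (Hgen : forall N, L <= INR (S N) * s -> exists n : nat, INR n * s < L <= INR (S n) * s).
{ induction N as [|N IH]; intros H.
  - simpl in H. lra.
  - destruct (Rle_dec L (INR (S N) * s)) as [Hle|Hn]; [apply IH; auto|].
    exists (S N). split; [lra|auto]. }
destruct (INR_unbounded (L / s)) as [N HN].
apply (Hgen N). rewrite S_INR.
apply (Rmult_lt_compat_r s) in HN; auto. unfold Rdiv in HN.
rewrite Rmult_assoc, Rinv_l, Rmult_1_r in HN by lra. lra.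
Qed.

Lemma phi_pern (r : R) (Hr : Rabs r < rho1) (om : R) (n : nat) (x : R) :
  phi r om (x + INR n * T r) = phi r om x.
Proof.
induction n.
- simpl. rewrite Rmult_0_l, Rplus_0_r. reflexivity.
- rewrite S_INR. replace (x + (INR n + 1) * T r) with ((x + INR n * T r) + T r) by ring.
  rewrite phi_per by auto. exact IHn.
Qed.

Theorem proposition4p1 (L : R) (hL : sqrt 2 * PI < L) (omega : R) :
  exists phi phi1 phi2 : R -> R,
    solves_logNLS omega phi phi1 phi2 /\
    L_periodic L phi /\
    even_fun phi /\
    (forall x : R, 0 < phi x) /\
    (exists x y : R, phi x <> phi y).
Proof.
set (s := sqrt 2 * PI).
assert (Hs : 0 < s) by (unfold s; apply Rmult_lt_0_compat; [apply Rlt_sqrt2_0|apply PI_RGT_0]).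
destruct (find_n s L Hs hL) as [n [Hn1 Hn2]].
assert (Hn : 1 <= INR n).
{ destruct n. simpl in Hn2. unfold s in *. lra. rewrite S_INR. pose proof (pos_INR n). lra. }
rewrite S_INR in Hn2.
set (tau := L / INR n).
assert (Htau1 : s < tau).
{ unfold tau. apply (Rmult_lt_reg_r (INR n)); [lra|]. unfold Rdiv.
  rewrite Rmult_assoc, Rinv_l, Rmult_1_r by lra. lra. }
assert (Htau2 : tau <= 2 * s).
{ unfold tau. apply (Rmult_le_reg_r (INR n)); [lra|]. unfold Rdiv.
  rewrite Rmult_assoc, Rinv_l, Rmult_1_r by lra. nra. }
pose proof rho_facts as Hrho.
destruct (f_interv_is_interv T 0 rho0 tau) as [r [Hr1 Hr2]].
- lra.
- rewrite T0. pose proof T_rho0. fold s. unfold s in *. lra.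
- intros x Hx. apply T_cont. rewrite Rabs_right; lra.
- assert (Hr : Rabs r < rho1) by (rewrite Rabs_right; lra).
  assert (Hr0 : r <> 0).
  { intro H0. rewrite H0, T0 in Hr2. fold s in Hr2. lra. }
  exists (phi r omega), (phi1 r omega), (phi2 r omega).
  split; [apply phi_sol; auto|].
  split.
  { intros x. replace L with (INR n * T r).
    - apply phi_pern; auto.
    - rewrite Hr2. unfold tau. field. lra. }
  split; [intros x; apply phi_even; auto|].
  split; [intros x; apply phi_pos; auto|].
  exists 0, (X r (PI + PI/2)).
  unfold phi, uu. rewrite th_X, th0 by auto. rewrite sin_PI2, Rtrigo_facts.sin_pi_plus, sin_PI2.
  intro Heq. apply Rmult_eq_reg_l in Heq; [|unfold cc; pose proof (exp_pos (omega/2)); lra].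
  assert (Hi1 : inr (r * 1)) by (replace (r * 1) with (r * sin (PI/2)) by (rewrite sin_PI2; auto); apply inr_rs; auto).
  assert (Hi2 : inr (r * Ropp 1)) by (replace (r * Ropp 1) with (r * sin (PI + PI/2)) by (rewrite Rtrigo_facts.sin_pi_plus, sin_PI2; ring); apply inr_rs; auto).
  destruct (Psi_in _ Hi1) as [_ E1]. destruct (Psi_in _ Hi2) as [_ E2].
  rewrite Heq in E1. rewrite E1 in E2. lra.
Qed.
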